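(* Let $\mathcal{A}=(\Sigma,Q,I,F,\delta)$ be an NFA, for each $w\in\Sigma$ let $T^{(w)}$ be its $|Q|\times|Q|$ Boolean transition matrix, and let $\mathcal{A}_{\mathrm{SS}}$ be the subset automaton of $\mathcal{A}$. Then $$|\mathcal{A}_{\mathrm{SS}}|\le 1+\sum_{w\in\Sigma}\left|\mathcal{R}(T^{(w)})\right|,$$ where $\mathcal{R}(T)$ denotes the range of the matrix $T$ over the Boolean semifield.
   Context: An NFA is $\mathcal{A}=(\Sigma,Q,I,F,\delta)$ with finite alphabet $\Sigma$, finite state set $Q=\{q_1,\dots,q_n\}$, initial states $I$, accepting states $F$, transitions $\delta\subseteq Q\times\Sigma\times Q$ ($\varepsilon$-free). The Boolean semifield is $\mathbb{B}=(\{0,1\},\vee,\wedge,0,1)$. The transition matrix $T^{(w)}\in\mathbb{B}^{n\times n}$ has $T^{(w)}_{i,j}=1$ iff $(q_i,w,q_j)\in\delta$. The range $\mathcal{R}(T)$ of a Boolean matrix $T$ is the set $\{Tv: v\in\mathbb{B}^n\}$ with Boolean matrix–vector multiplication. The subset automaton $\mathcal{A}_{\mathrm{SS}}$ is the DFA whose states are exactly the subsets $\mathcal{Q}\subseteq Q$ reachable from $\mathcal{Q}_I=I$ by repeatedly applying, for $w\in\Sigma$, the map $\mathcal{Q}\mapsto\{q':(q,w,q')\in\delta,\ q\in\mathcal{Q}\}$ (including the empty set if reachable); $|\mathcal{A}_{\mathrm{SS}}|$ is its number of states. *)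

(* Defs.v *)
From mathcomp Require Import all_boot.
Set Implicit Arguments. Unset Strict Implicit. Unset Printing Implicit Defensive.

(* An epsilon-free NFA over alphabet Sigma with state set Q = {q_1..q_n},
   represented as 'I_n (q_{i+1} <-> i). *)
Record nfa (Sigma : finType) (n : nat) := NFA {
  init  : {set 'I_n};
  final : {set 'I_n};
  delta : 'I_n -> Sigma -> 'I_n -> bool
}.

Definition bmatrix (n : nat) := 'I_n -> 'I_n -> bool.
Definition bvec (n : nat) := {ffun 'I_n -> bool}.

Definition bmv n (T : bmatrix n) (v : bvec n) : bvec n :=
  [ffun i => [exists j, T i j && v j]].

Definition brange n (T : bmatrix n) : {set bvec n} :=
  [set bmv T v | v : bvec n].

Definition tmat Sigma n (A : nfa Sigma n) (w : Sigma) : bmatrix n :=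
  fun i j => delta A i w j.

Definition ss_step Sigma n (A : nfa Sigma n) (S : {set 'I_n}) (w : Sigma)
  : {set 'I_n} := [set q' | [exists q in S, delta A q w q']].

Definition ss_edge Sigma n (A : nfa Sigma n) : rel {set 'I_n} :=
  fun S S' => [exists w, S' == ss_step A S w].

Definition ss_states Sigma n (A : nfa Sigma n) : {set {set 'I_n}} :=
  [set S | connect (ss_edge A) (init A) S].

Definition ss_size Sigma n (A : nfa Sigma n) : nat := #|ss_states A|.

(* Main.v *)
Require Import Defs.
From mathcomp Require Import all_boot.

Lemma card_bigcup_leq (T I : finType) (F : I -> {set T}) :
  #|\bigcup_(i : I) F i| <= \sum_(i : I) #|F i|.
Proof.
apply: (big_rec2 (fun (x : {set T}) (y : nat) => #|x| <= y)).
  by rewrite cards0.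
move=> i y1 y2 _ H.
apply: leq_trans (leq_card_setU _ _) _.
by rewrite leq_add2l.
Qed.

Lemma img_card Sigma n (A : nfa Sigma n) (w : Sigma) :
  #|[set ss_step A S w | S : {set 'I_n}]| <= #|brange (tmat A w)|.
Proof.
set Img := [set ss_step A S w | S : {set 'I_n}].
pose g (Y : {set 'I_n}) : bvec n := bmv (tmat A w) [ffun j => j \notin Y].
pose h (x : bvec n) : {set 'I_n} :=
  [set j | [exists i, ~~ x i && delta A i w j]].
have hg : {in Img, forall Y, h (g Y) = Y}.
  move=> Y /imsetP [S _ ->]; apply/setP => j.
  rewrite [in LHS]inE /g /bmv; apply/idP/idP.
  - case/existsP=> i /andP [Hi Hd].
    apply: contraNT Hi => HjS; rewrite ?negbK ffunE; apply/existsP.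
    by exists j; rewrite /tmat Hd ffunE HjS.
  - rewrite inE => /existsP [i /andP [HiS Hd]]; apply/existsP; exists i.
    rewrite Hd andbT ffunE; apply/negP => /existsP [j' /andP [Hd' Hn]].
    move: Hn; rewrite ffunE inE => /existsP; apply; exists i.
    by rewrite HiS.
rewrite -(card_in_imset (f := g)); last first.
  by move=> Y1 Y2 H1 H2 E; rewrite -(hg _ H1) -(hg _ H2) E.
apply: subset_leq_card; apply/subsetP => x /imsetP [Y _ ->].
by apply/imsetP; exists [ffun j => j \notin Y].
Qed.

Theorem lemma2 (Sigma : finType) (n : nat) (A : nfa Sigma n) :
  ss_size A <= 1 + \sum_(w : Sigma) #|brange (tmat A w)|.
Proof.
set U := \bigcup_(w : Sigma) [set ss_step A S w | S : {set 'I_n}].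
have sub : ss_states A \subset init A |: U.
  apply/subsetP => S; rewrite inE => /connectP [p Hp ->].
  move: Hp; case/lastP: p => [|p z]; first by rewrite /= !inE eqxx.
  rewrite rcons_path last_rcons => /andP [_ /existsP [w /eqP ->]].
  rewrite !inE; apply/orP; right; apply/bigcupP; exists w => //.
  by apply/imsetP; exists (last (init A) p).
rewrite /ss_size; apply: leq_trans (subset_leq_card sub) _.
rewrite cardsU1; apply: leq_add; first by case: (_ \notin _).
apply: leq_trans (card_bigcup_leq _ _ _) _.
by apply: leq_sum => w _; apply: img_card.
Qed.
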